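(* Let $(A,* )$ be a finite-dimensional associative algebra, $(l,\rho,V)$ a finite-dimensional bimodule of $A$, and $T:V\to A$ an $\mathcal O$-operator associated to $(l,\rho,V)$. Let $T(V)\subset A$ carry the products $T(u)\succ T(v)=T(l(T(u))v)$, $T(u)\prec T(v)=T(\rho(T(v))u)$ ($u,v\in V$). Let $\mathcal D=T(V)\oplus V^*$ with products $$(x+a^* )\succ(y+b^* )=x\succ y+\rho^*(x)b^*,\qquad (x+a^* )\prec(y+b^* )=x\prec y+l^*(y)a^*$$ for $x,y\in T(V)$, $a^*,b^*\in V^*$. Then $\mathcal D$ is a dendriform algebra, and, with $\{v_1,\dots,v_m\}$ a basis of $V$ with dual basis $\{v_1^*,\dots,v_m^*\}$ and $T$ identified with $\sum_i T(v_i)\otimes v_i^*\in\mathcal D\otimes\mathcal D$, the element $r=T+\sigma(T)$ is a symmetric solution of the $D$-equation $r_{12}*r_{13}=r_{13}\prec r_{23}+r_{23}\succ r_{12}$ in $\mathcal D$ (where $*=\succ+\prec$ on $\mathcal D$).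
   Context: A bimodule of an associative algebra $(A,* )$ is a pair of linear maps $l,\rho:A\to\mathfrak{gl}(V)$ with $l(x*y)=l(x)l(y)$, $\rho(x*y)=\rho(y)\rho(x)$, $l(x)\rho(y)=\rho(y)l(x)$. For such maps, $l^*,\rho^*:A\to\mathfrak{gl}(V^* )$ are $\langle l^*(x)u^*,v\rangle=\langle u^*,l(x)v\rangle$, $\langle\rho^*(x)u^*,v\rangle=\langle u^*,\rho(x)v\rangle$ (here restricted to $T(V)$). An $\mathcal O$-operator associated to $(l,\rho,V)$ is a linear $T:V\to A$ with $T(u)*T(v)=T(l(T(u))v+\rho(T(v))u)$ for all $u,v\in V$. A dendriform algebra is a vector space with bilinear products $\prec,\succ$ such that, writing $x*y=x\prec y+x\succ y$: $(x\prec y)\prec z=x\prec(y*z)$, $(x\succ y)\prec z=x\succ(y\prec z)$, $x\succ(y\succ z)=(x*y)\succ z$. $\sigma(u\otimes v)=v\otimes u$. For $r=\sum_i x_i\otimes y_i$: $r_{12}*r_{13}=\sum_{i,j}x_i*x_j\otimes y_i\otimes y_j$, $r_{13}\prec r_{23}=\sum_{i,j}x_i\otimes x_j\otimes y_i\prec y_j$, $r_{23}\succ r_{12}=\sum_{i,j}x_j\otimes x_i\succ y_j\otimes y_i$. *)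

(* Defs.v *)
From HB Require Import structures.
From mathcomp Require Import all_boot all_order all_algebra.
Set Implicit Arguments. Unset Strict Implicit. Unset Printing Implicit Defensive.
Import GRing.Theory.
Local Open Scope ring_scope.

(* Ambient carrier of D = T(V) oplus V^dual : pairs (x, a) with x : A, a : V^dual = 'Hom(V, K^o).
   Elements of D are those pairs whose first component lies in limg T. *)
Definition Dty (K : fieldType) (A V : vectType K) : Type :=
  (A * 'Hom(V, K^o))%type.

(* x >- y on T(V): T(u) >- T(v) = T(l(T u) v); the preimage v of y is taken via the
   linear right inverse (T^-1)%VF (the value does not depend on the preimage, by the
   O-operator identity). *)
Definition dsucc (K : fieldType) (A V : vectType K) (l rho : 'Hom(A, 'End(V)))
  (T : 'Hom(V, A)) (X Y : Dty A V) : Dty A V :=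
  (T (l X.1 ((T^-1)%VF Y.1)), (Y.2 \o rho X.1)%VF).

Definition dprec (K : fieldType) (A V : vectType K) (l rho : 'Hom(A, 'End(V)))
  (T : 'Hom(V, A)) (X Y : Dty A V) : Dty A V :=
  (T (rho Y.1 ((T^-1)%VF X.1)), (X.2 \o l Y.1)%VF).

Definition dmul (K : fieldType) (A V : vectType K) (l rho : 'Hom(A, 'End(V)))
  (T : 'Hom(V, A)) (X Y : Dty A V) : Dty A V :=
  dsucc l rho T X Y + dprec l rho T X Y.

(* r = T + sigma(T) = sum_i (T(v_i) tensor v_i^dual + v_i^dual tensor T(v_i)), indexed by (i, b). *)
Definition rl (K : fieldType) (A V : vectType K) (T : 'Hom(V, A)) (m : nat)
  (vs : m.-tuple V) (k : 'I_m * bool) : Dty A V :=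
  if k.2 then (T vs`_k.1, 0) else (0, linfun (coord vs k.1 : V -> K^o)).
Definition rr (K : fieldType) (A V : vectType K) (T : 'Hom(V, A)) (m : nat)
  (vs : m.-tuple V) (k : 'I_m * bool) : Dty A V :=
  if k.2 then (0, linfun (coord vs k.1 : V -> K^o)) else (T vs`_k.1, 0).

(* Main.v *)
Require Import Defs.
From HB Require Import structures.
From mathcomp Require Import all_boot all_order all_algebra.
From mathcomp Require Import ring.
Import GRing.Theory.
Local Open Scope ring_scope.
Theorem theorem4p4p13 (K : fieldType) (A V : vectType K) (mulA : A -> A -> A)
  (mulA_linl : forall (a : K) (x y z : A), mulA (a *: x + y) z = a *: mulA x z + mulA y z)
  (mulA_linr : forall (a : K) (x y z : A), mulA z (a *: x + y) = a *: mulA z x + mulA z y)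
  (mulA_assoc : forall x y z : A, mulA (mulA x y) z = mulA x (mulA y z))
  (l rho : 'Hom(A, 'End(V)))
  (l_mul : forall x y : A, l (mulA x y) = (l x \o l y)%VF)
  (rho_mul : forall x y : A, rho (mulA x y) = (rho y \o rho x)%VF)
  (l_rho_comm : forall x y : A, (l x \o rho y)%VF = (rho y \o l x)%VF)
  (T : 'Hom(V, A))
  (T_Oop : forall u v : V, mulA (T u) (T v) = T (l (T u) v + rho (T v) u))
  (m : nat) (vs : m.-tuple V) (vs_basis : basis_of fullv vs) :
  (* D is a dendriform algebra *)
  (forall X Y Z : Dty A V, X.1 \in limg T -> Y.1 \in limg T -> Z.1 \in limg T ->
     [/\ dprec l rho T (dprec l rho T X Y) Z = dprec l rho T X (dmul l rho T Y Z),
         dprec l rho T (dsucc l rho T X Y) Z = dsucc l rho T X (dprec l rho T Y Z) &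
         dsucc l rho T X (dsucc l rho T Y Z) = dsucc l rho T (dmul l rho T X Y) Z])
  /\
  (* r = T + sigma(T) is symmetric: (f tensor g)(sigma r) = (f tensor g)(r) for all functionals *)
  (forall f g : 'Hom(Dty A V, K^o),
     \sum_(k : 'I_m * bool) f (rl T vs k) * g (rr T vs k)
     = \sum_(k : 'I_m * bool) f (rr T vs k) * g (rl T vs k))
  /\
  (* D-equation r12 * r13 = r13 -< r23 + r23 >- r12, tested against all f tensor g tensor h *)
  (forall f g h : 'Hom(Dty A V, K^o),
     \sum_(k : 'I_m * bool) \sum_(k' : 'I_m * bool)
        f (dmul l rho T (rl T vs k) (rl T vs k')) * g (rr T vs k) * h (rr T vs k')
     = \sum_(k : 'I_m * bool) \sum_(k' : 'I_m * bool)
        (f (rl T vs k) * g (rl T vs k') * h (dprec l rho T (rr T vs k) (rr T vs k'))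
         + f (rl T vs k') * g (dsucc l rho T (rl T vs k) (rr T vs k')) * h (rr T vs k))).
Proof.
have Tinv : forall v, T ((T^-1)%VF (T v)) = T v.
  by move=> v; rewrite limg_lfunVK // memv_img ?memvf.
have mul0A : forall z, mulA 0 z = 0.
  move=> z; have := mulA_linl 1 0 0 z; rewrite !scale1r addr0.
  by move/(congr1 (fun t => t - mulA 0 z)); rewrite subrr addrK => <-.
have mulA0 : forall z, mulA z 0 = 0.
  move=> z; have := mulA_linr 1 0 0 z; rewrite !scale1r addr0.
  by move/(congr1 (fun t => t - mulA z 0)); rewrite subrr addrK => <-.
have kerl : forall u w, T w = 0 -> T (l (T u) w) = 0.
  move=> u w Hw; have := T_Oop u w; rewrite Hw mulA0 raddf0 zero_lfunE addr0.
  by move->.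
have kerr : forall u w, T w = 0 -> T (rho (T u) w) = 0.
  move=> u w Hw; have := T_Oop w u; rewrite Hw mul0A raddf0 zero_lfunE add0r.
  by move->.
have Tl' : forall u t v, T t = T v -> T (l (T u) t) = T (l (T u) v).
  move=> u t v Htv; have := kerl u (t - v).
  rewrite (raddfB T) /= Htv subrr => /(_ erefl).
  by rewrite !raddfB /= => /eqP; rewrite subr_eq0 => /eqP.
have Tr' : forall u t v, T t = T v -> T (rho (T u) t) = T (rho (T u) v).
  move=> u t v Htv; have := kerr u (t - v).
  rewrite (raddfB T) /= Htv subrr => /(_ erefl).
  by rewrite !raddfB /= => /eqP; rewrite subr_eq0 => /eqP.
have Tl : forall u v, T (l (T u) ((T^-1)%VF (T v))) = T (l (T u) v).
  by move=> u v; apply: Tl'; rewrite Tinv.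
have Tr : forall u v, T (rho (T u) ((T^-1)%VF (T v))) = T (rho (T u) v).
  by move=> u v; apply: Tr'; rewrite Tinv.
have Tsum : forall u v, T (l (T u) v) + T (rho (T v) u) = mulA (T u) (T v).
  by move=> u v; rewrite T_Oop raddfD.
split.
  move=> [x a] [y b] [z c] /= /memv_imgP[u _ ->] /memv_imgP[v _ ->] /memv_imgP[w _ ->].
  rewrite /dmul /dprec /dsucc /=.
  rewrite !Tl !Tr !Tsum !rho_mul !l_mul !comp_lfunE -!comp_lfunA l_rho_comm.
  split => //.
    congr (_, _); rewrite -comp_lfunE -l_rho_comm comp_lfunE.
    by symmetry; apply: Tl'; exact: Tr.
  by congr (_, _); symmetry; apply: Tl'; exact: Tl.
split.
  move=> f g.
  have inj : injective (fun k : 'I_m * bool => (k.1, ~~ k.2)).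
    by apply: (can_inj (g := fun k : 'I_m * bool => (k.1, ~~ k.2))) => -[i []].
  rewrite (reindex_inj inj) /=.
  by apply: eq_bigr => -[i []] _; rewrite /rl /rr /= mulrC.
suff P3 : forall f g h : 'Hom(Dty A V, K^o),
     \sum_(k : 'I_m * bool) \sum_(k' : 'I_m * bool)
        ((f (dmul l rho T (rl T vs k) (rl T vs k')) : K) * (g (rr T vs k) : K) * (h (rr T vs k') : K))
     = \sum_(k : 'I_m * bool) \sum_(k' : 'I_m * bool)
        ((f (rl T vs k) : K) * (g (rl T vs k') : K) * (h (dprec l rho T (rr T vs k) (rr T vs k')) : K)
         + (f (rl T vs k') : K) * (g (dsucc l rho T (rl T vs k) (rr T vs k')) : K) * (h (rr T vs k) : K)).
  by move=> f g h; exact: P3.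
move=> f g h.
have sumIB : forall (F : 'I_m * bool -> K), \sum_(k : 'I_m * bool) F k = \sum_(i < m) F (i, true) + \sum_(i < m) F (i, false).
  move=> F; transitivity (\sum_(i < m) \sum_(b : bool) F (i, b)).
    by rewrite pair_big /=; apply: eq_bigr => -[i b].
  by rewrite -big_split; apply: eq_bigr => i _; rewrite big_bool.
have sum2IB : forall (F : 'I_m * bool -> 'I_m * bool -> K),
   \sum_(k : 'I_m * bool) \sum_(k' : 'I_m * bool) F k k' =
   \sum_(i < m) \sum_(j < m) F (i, true) (j, true) + \sum_(i < m) \sum_(j < m) F (i, true) (j, false)
   + \sum_(i < m) \sum_(j < m) F (i, false) (j, true) + \sum_(i < m) \sum_(j < m) F (i, false) (j, false).
  move=> F; rewrite sumIB.
  under eq_bigr => i _ do rewrite sumIB.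
  under [X in _ + X]eq_bigr => i _ do rewrite sumIB.
  by rewrite !big_split /= !addrA.
under [RHS]eq_bigr => k _ do rewrite big_split.
rewrite big_split /= !sum2IB /rl /rr /dmul /dsucc /dprec /=.
have f00 : forall F : 'Hom(Dty A V, K^o), F (0, 0) = 0 by move=> F; exact: linear0.
have pZD1 : forall (a : K) (x y : A), ((a *: x + y, 0) : Dty A V) = a *: (x, 0) + (y, 0).
  move=> a x y; rewrite [RHS](_ : _ = (a *: x + y, a *: 0 + 0)) //.
  by rewrite scaler0 addr0.
have pZD2 : forall (a : K) (x y : 'Hom(V, K^o)), ((0, a *: x + y) : Dty A V) = a *: (0, x) + (0, y).
  move=> a x y; rewrite [RHS](_ : _ = (a *: 0 + 0, a *: x + y)) //.
  by rewrite scaler0 addr0.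
have contr : forall (P : V -> K), (forall (a : K) x y, P (a *: x + y) = a * P x + P y) ->
    forall w, \sum_(i < m) coord vs i w * P vs`_i = P w.
  move=> P HP w.
  have P0 : P 0 = 0.
    have := HP 1 0 0; rewrite scale1r addr0 mul1r.
    by move/(congr1 (fun t => t - P 0)); rewrite subrr addrK => <-.
  rewrite {2}(coord_basis vs_basis (memvf w)).
  elim/big_rec2 : _ => [|i y1 y2 _ ->]; first by rewrite P0.
  by rewrite HP.
pose C := fun k : 'I_m => linfun (coord vs k : V -> K^o).
pose hat := fun F : 'Hom(Dty A V, K^o) => \sum_(k < m) F (0, C k) *: vs`_k.
have gC : forall (F : 'Hom(Dty A V, K^o)) (phi : 'Hom(V, K^o)), F (0, phi) = phi (hat F).
  move=> F phi.
  have Ephi : phi = \sum_(k < m) phi vs`_k *: C k.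
    apply/lfunP => x; rewrite sum_lfunE.
    rewrite -(contr phi _ x); last by move=> a u v; rewrite linearP.
    by apply: eq_bigr => k _; rewrite scale_lfunE lfunE /= mulrC.
  rewrite {1}Ephi /hat linear_sum /=.
  elim/big_rec2 : _ => [|k y1 y2 _ <-]; first by rewrite f00.
  by rewrite pZD2 linearP /= linearZ /=; congr (_ + _); exact: mulrC.
have pD1 : forall x y : A, ((x + y, 0) : Dty A V) = (x, 0) + (y, 0).
  by move=> x y; have := pZD1 1 x y; rewrite !scale1r.
have linA : forall (F : 'Hom(Dty A V, K^o)) (G : V -> A),
    (forall (a : K) x y, G (a *: x + y) = a *: G x + G y) ->
    forall (a : K) x y, F (G (a *: x + y), 0) = a * F (G x, 0) + F (G y, 0).
  by move=> F G HG a x y; rewrite HG pZD1 linearP.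
have EB1 : \sum_(i < m) \sum_(j < m)
   f ((T (l (T vs`_i) ((T^-1)%VF (T vs`_j))), (0 \o rho (T vs`_i))%VF) +
      (T (rho (T vs`_j) ((T^-1)%VF (T vs`_i))), (0 \o l (T vs`_j))%VF) : Dty A V) *
   g (0, linfun (coord vs i : V -> K^o)) * h (0, linfun (coord vs j : V -> K^o))
   = f (mulA (T (hat g)) (T (hat h)), 0).
  transitivity (\sum_(i < m) coord vs i (hat g) * f (mulA (T vs`_i) (T (hat h)), 0)).
    apply: eq_bigr => i _.
    transitivity (coord vs i (hat g) * \sum_(j < m) coord vs j (hat h) * f (mulA (T vs`_i) (T vs`_j), 0)).
      rewrite mulr_sumr; apply: eq_bigr => j _.
      rewrite !gC !lfunE /= !comp_lfun0l linearD /= Tl Tr -Tsum pD1 linearD /=.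
      ring.
    congr (_ * _); apply: (contr (fun v => f (mulA (T vs`_i) (T v), 0))).
    by apply: linA => a x y; rewrite linearP mulA_linr.
  apply: (contr (fun v => f (mulA (T v) (T (hat h)), 0))).
  by apply: linA => a x y; rewrite linearP mulA_linl.
have EB2 : \sum_(i < m) \sum_(j < m) f ((T (l (T vs`_i) ((T^-1)%VF 0)), (linfun (coord vs j : V -> K^o) \o rho (T vs`_i))%VF) + (T (rho 0 ((T^-1)%VF (T vs`_i))), (0 \o l 0)%VF) : Dty A V) * g (0, linfun (coord vs i : V -> K^o)) * h (T vs`_j, 0) = h (T (rho (T (hat g)) (hat f)), 0).
  transitivity (\sum_(i < m) coord vs i (hat g) * h (T (rho (T vs`_i) (hat f)), 0)).
    apply: eq_bigr => i _.
    transitivity (coord vs i (hat g) * \sum_(j < m) coord vs j (rho (T vs`_i) (hat f)) * (fun v => h (T v, 0)) vs`_j).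
      rewrite mulr_sumr; apply: eq_bigr => j _ /=.
      rewrite ?raddf0 ?zero_lfunE ?raddf0 ?zero_lfunE ?raddf0 ?comp_lfun0l ?comp_lfun0r ?linearD /= ?f00 ?addr0 ?add0r ?gC ?comp_lfunE ?lfunE /= ?Tl ?Tr; ring.
    congr (_ * _); apply: (contr (fun v => h (T v, 0))).
    by apply: linA => a x y; rewrite !linearP /= ?add_lfunE ?scale_lfunE /= ?linearP ?mulA_linl ?mulA_linr.
  apply: (contr (fun v => h (T (rho (T v) (hat f)), 0))).
  by apply: linA => a x y; rewrite !linearP /= ?add_lfunE ?scale_lfunE /= ?linearP ?mulA_linl ?mulA_linr.
have EB3 : \sum_(i < m) \sum_(j < m) f ((T (l 0 ((T^-1)%VF (T vs`_j))), (0 \o rho 0)%VF) + (T (rho (T vs`_j) ((T^-1)%VF 0)), (linfun (coord vs i : V -> K^o) \o l (T vs`_j))%VF) : Dty A V) * g (T vs`_i, 0) * h (0, linfun (coord vs j : V -> K^o)) = g (T (l (T (hat h)) (hat f)), 0).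
  transitivity (\sum_(j < m) coord vs j (hat h) * g (T (l (T vs`_j) (hat f)), 0)).
    rewrite exchange_big /=.
    apply: eq_bigr => j _.
    transitivity (coord vs j (hat h) * \sum_(i < m) coord vs i (l (T vs`_j) (hat f)) * (fun v => g (T v, 0)) vs`_i).
      rewrite mulr_sumr; apply: eq_bigr => i _ /=.
      rewrite ?raddf0 ?zero_lfunE ?raddf0 ?zero_lfunE ?raddf0 ?comp_lfun0l ?comp_lfun0r ?linearD /= ?f00 ?addr0 ?add0r ?gC ?comp_lfunE ?lfunE /= ?Tl ?Tr; ring.
    congr (_ * _); apply: (contr (fun v => g (T v, 0))).
    by apply: linA => a x y; rewrite !linearP /= ?add_lfunE ?scale_lfunE /= ?linearP ?mulA_linl ?mulA_linr.
  apply: (contr (fun v => g (T (l (T v) (hat f)), 0))).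
  by apply: linA => a x y; rewrite !linearP /= ?add_lfunE ?scale_lfunE /= ?linearP ?mulA_linl ?mulA_linr.
have ER2 : \sum_(i < m) \sum_(j < m) f (T vs`_i, 0) * g (0, linfun (coord vs j : V -> K^o)) * h (T (rho (T vs`_j) ((T^-1)%VF 0)), (linfun (coord vs i : V -> K^o) \o l (T vs`_j))%VF) = f (T (l (T (hat g)) (hat h)), 0).
  transitivity (\sum_(j < m) coord vs j (hat g) * f (T (l (T vs`_j) (hat h)), 0)).
    rewrite exchange_big /=.
    apply: eq_bigr => j _.
    transitivity (coord vs j (hat g) * \sum_(i < m) coord vs i (l (T vs`_j) (hat h)) * (fun v => f (T v, 0)) vs`_i).
      rewrite mulr_sumr; apply: eq_bigr => i _ /=.
      rewrite ?raddf0 ?zero_lfunE ?raddf0 ?zero_lfunE ?raddf0 ?comp_lfun0l ?comp_lfun0r ?linearD /= ?f00 ?addr0 ?add0r ?gC ?comp_lfunE ?lfunE /= ?Tl ?Tr; ring.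
    congr (_ * _); apply: (contr (fun v => f (T v, 0))).
    by apply: linA => a x y; rewrite !linearP /= ?add_lfunE ?scale_lfunE /= ?linearP ?mulA_linl ?mulA_linr.
  apply: (contr (fun v => f (T (l (T v) (hat h)), 0))).
  by apply: linA => a x y; rewrite !linearP /= ?add_lfunE ?scale_lfunE /= ?linearP ?mulA_linl ?mulA_linr.
have ER4 : \sum_(i < m) \sum_(j < m) f (0, linfun (coord vs i : V -> K^o)) * g (0, linfun (coord vs j : V -> K^o)) * h (T (rho (T vs`_j) ((T^-1)%VF (T vs`_i))), (0 \o l (T vs`_j))%VF) = h (T (rho (T (hat g)) (hat f)), 0).
  transitivity (\sum_(j < m) coord vs j (hat g) * h (T (rho (T vs`_j) (hat f)), 0)).
    rewrite exchange_big /=.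
    apply: eq_bigr => j _.
    transitivity (coord vs j (hat g) * \sum_(i < m) coord vs i (hat f) * (fun v => h (T (rho (T vs`_j) v), 0)) vs`_i).
      rewrite mulr_sumr; apply: eq_bigr => i _ /=.
      rewrite ?raddf0 ?zero_lfunE ?raddf0 ?zero_lfunE ?raddf0 ?comp_lfun0l ?comp_lfun0r ?linearD /= ?f00 ?addr0 ?add0r ?gC ?comp_lfunE ?lfunE /= ?Tl ?Tr; ring.
    congr (_ * _); apply: (contr (fun v => h (T (rho (T vs`_j) v), 0))).
    by apply: linA => a x y; rewrite !linearP /= ?add_lfunE ?scale_lfunE /= ?linearP ?mulA_linl ?mulA_linr.
  apply: (contr (fun v => h (T (rho (T v) (hat f)), 0))).
  by apply: linA => a x y; rewrite !linearP /= ?add_lfunE ?scale_lfunE /= ?linearP ?mulA_linl ?mulA_linr.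
have ES1 : \sum_(i < m) \sum_(j < m) f (T vs`_j, 0) * g (T (l (T vs`_i) ((T^-1)%VF 0)), (linfun (coord vs j : V -> K^o) \o rho (T vs`_i))%VF) * h (0, linfun (coord vs i : V -> K^o)) = f (T (rho (T (hat h)) (hat g)), 0).
  transitivity (\sum_(i < m) coord vs i (hat h) * f (T (rho (T vs`_i) (hat g)), 0)).
    apply: eq_bigr => i _.
    transitivity (coord vs i (hat h) * \sum_(j < m) coord vs j (rho (T vs`_i) (hat g)) * (fun v => f (T v, 0)) vs`_j).
      rewrite mulr_sumr; apply: eq_bigr => j _ /=.
      rewrite ?raddf0 ?zero_lfunE ?raddf0 ?zero_lfunE ?raddf0 ?comp_lfun0l ?comp_lfun0r ?linearD /= ?f00 ?addr0 ?add0r ?gC ?comp_lfunE ?lfunE /= ?Tl ?Tr; ring.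
    congr (_ * _); apply: (contr (fun v => f (T v, 0))).
    by apply: linA => a x y; rewrite !linearP /= ?add_lfunE ?scale_lfunE /= ?linearP ?mulA_linl ?mulA_linr.
  apply: (contr (fun v => f (T (rho (T v) (hat g)), 0))).
  by apply: linA => a x y; rewrite !linearP /= ?add_lfunE ?scale_lfunE /= ?linearP ?mulA_linl ?mulA_linr.
have ES2 : \sum_(i < m) \sum_(j < m) f (0, linfun (coord vs j : V -> K^o)) * g (T (l (T vs`_i) ((T^-1)%VF (T vs`_j))), (0 \o rho (T vs`_i))%VF) * h (0, linfun (coord vs i : V -> K^o)) = g (T (l (T (hat h)) (hat f)), 0).
  transitivity (\sum_(i < m) coord vs i (hat h) * g (T (l (T vs`_i) (hat f)), 0)).
    apply: eq_bigr => i _.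
    transitivity (coord vs i (hat h) * \sum_(j < m) coord vs j (hat f) * (fun v => g (T (l (T vs`_i) v), 0)) vs`_j).
      rewrite mulr_sumr; apply: eq_bigr => j _ /=.
      rewrite ?raddf0 ?zero_lfunE ?raddf0 ?zero_lfunE ?raddf0 ?comp_lfun0l ?comp_lfun0r ?linearD /= ?f00 ?addr0 ?add0r ?gC ?comp_lfunE ?lfunE /= ?Tl ?Tr; ring.
    congr (_ * _); apply: (contr (fun v => g (T (l (T vs`_i) v), 0))).
    by apply: linA => a x y; rewrite !linearP /= ?add_lfunE ?scale_lfunE /= ?linearP ?mulA_linl ?mulA_linr.
  apply: (contr (fun v => g (T (l (T v) (hat f)), 0))).
  by apply: linA => a x y; rewrite !linearP /= ?add_lfunE ?scale_lfunE /= ?linearP ?mulA_linl ?mulA_linr.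
have Z1 : \sum_(i < m) \sum_(j < m) f ((T (l 0 ((T^-1)%VF 0)), (linfun (coord vs j : V -> K^o) \o rho 0)%VF) + (T (rho 0 ((T^-1)%VF 0)), (linfun (coord vs i : V -> K^o) \o l 0)%VF) : Dty A V) * g (T vs`_i, 0) * h (T vs`_j, 0) = 0.
  rewrite big1 // => i _; rewrite big1 // => j _.
  by rewrite ?raddf0 ?zero_lfunE ?raddf0 ?zero_lfunE ?raddf0 ?comp_lfun0l ?comp_lfun0r ?linearD /= ?f00 ?addr0 ?add0r ?mulr0 ?mul0r.
have Z2 : \sum_(i < m) \sum_(j < m) f (T vs`_i, 0) * g (T vs`_j, 0) * h (T (rho 0 ((T^-1)%VF 0)), (linfun (coord vs i : V -> K^o) \o l 0)%VF) = 0.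
  rewrite big1 // => i _; rewrite big1 // => j _.
  by rewrite ?raddf0 ?zero_lfunE ?raddf0 ?zero_lfunE ?raddf0 ?comp_lfun0l ?comp_lfun0r ?linearD /= ?f00 ?addr0 ?add0r ?mulr0 ?mul0r.
have Z3 : \sum_(i < m) \sum_(j < m) f (0, linfun (coord vs i : V -> K^o)) * g (T vs`_j, 0) * h (T (rho 0 ((T^-1)%VF (T vs`_i))), (0 \o l 0)%VF) = 0.
  rewrite big1 // => i _; rewrite big1 // => j _.
  by rewrite ?raddf0 ?zero_lfunE ?raddf0 ?zero_lfunE ?raddf0 ?comp_lfun0l ?comp_lfun0r ?linearD /= ?f00 ?addr0 ?add0r ?mulr0 ?mul0r.
have Z4 : \sum_(i < m) \sum_(j < m) f (T vs`_j, 0) * g (T (l 0 ((T^-1)%VF 0)), (linfun (coord vs j : V -> K^o) \o rho 0)%VF) * h (T vs`_i, 0) = 0.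
  rewrite big1 // => i _; rewrite big1 // => j _.
  by rewrite ?raddf0 ?zero_lfunE ?raddf0 ?zero_lfunE ?raddf0 ?comp_lfun0l ?comp_lfun0r ?linearD /= ?f00 ?addr0 ?add0r ?mulr0 ?mul0r.
have Z5 : \sum_(i < m) \sum_(j < m) f (0, linfun (coord vs j : V -> K^o)) * g (T (l 0 ((T^-1)%VF (T vs`_j))), (0 \o rho 0)%VF) * h (T vs`_i, 0) = 0.
  rewrite big1 // => i _; rewrite big1 // => j _.
  by rewrite ?raddf0 ?zero_lfunE ?raddf0 ?zero_lfunE ?raddf0 ?comp_lfun0l ?comp_lfun0r ?linearD /= ?f00 ?addr0 ?add0r ?mulr0 ?mul0r.
rewrite EB1 EB2 EB3 Z1 ER2 ER4 Z2 Z3 ES1 ES2 Z4 Z5.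
rewrite -Tsum pD1 linearD /=; ring.
Qed.
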